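(* Let $\phi$ be the real root of $x^3=x^2+x+1$ and let $\phi_1$ be one of its two non-real roots. Define \[\psi_1=\frac{\phi_1^3+\phi_1^2}{\phi_1^2+2\phi_1+3},\qquad \zeta_1=\frac{\phi_1^3}{\phi_1^2+2\phi_1+3}.\] For integers $k,l$ put \[\alpha=\frac{k\phi^2+(k+l)\phi^3}{\phi^2+2\phi+3},\qquad \beta=\left|2(k\psi_1+l\zeta_1)\right|.\] Then for all integers $k,l$, $|\alpha|\le |k|+|l|$ and $\beta\ge \frac{|k|+|l|}{31}$.
   Context: The value of $\beta$ does not depend on which of the two complex-conjugate non-real roots is chosen as $\phi_1$. *)

(* Defs.v *)
From mathcomp Require Import all_boot all_order all_algebra all_field.
Set Implicit Arguments. Unset Strict Implicit. Unset Printing Implicit Defensive.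
Import Order.TTheory GRing.Theory Num.Theory.
Local Open Scope ring_scope.

(* The complex numbers are modelled by algC (algebraic complex numbers);
   all quantities in the statement are algebraic. *)

Definition trib_root (x : algC) : Prop := x ^+ 3 = x ^+ 2 + x + 1.

Definition psi1 (p1 : algC) : algC := (p1 ^+ 3 + p1 ^+ 2) / (p1 ^+ 2 + 2 * p1 + 3).
Definition zeta1 (p1 : algC) : algC := p1 ^+ 3 / (p1 ^+ 2 + 2 * p1 + 3).

Definition alpha (p : algC) (k l : int) : algC :=
  (k%:~R * p ^+ 2 + (k + l)%:~R * p ^+ 3) / (p ^+ 2 + 2 * p + 3).

Definition beta (p1 : algC) (k l : int) : algC :=
  `|2 * (k%:~R * psi1 p1 + l%:~R * zeta1 p1)|.

(* Main.v *)
Require Import Defs.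
From mathcomp Require Import all_boot all_order all_algebra all_field.
From mathcomp Require Import ring lra.
Import Order.TTheory GRing.Theory Num.Theory.
Local Open Scope ring_scope.

Lemma Sbounds (S : algR) : S^+3 - 2*S^+2 + 2 = 0 -> -9/10 < S < -4/5.
Proof.
move=> H; apply/andP; split.
  rewrite ltNge; apply/negP => h.
  have q : 0 < S^+2 - 29/10*S + 261/100 by have := sqr_ge0 (S - 29/20); nra.
  have : S^+3 - 2*S^+2 + 2 = (S + 9/10) * (S^+2 - 29/10*S + 261/100) - 349/1000 by field.
  rewrite H => e. nra.
rewrite ltNge; apply/negP => h.
have q : 0 < S^+2 - 28/10*S + 224/100 by have := sqr_ge0 (S - 14/10); nra.
have : S^+3 - 2*S^+2 + 2 = (S + 4/5) * (S^+2 - 28/10*S + 224/100) + 208/1000 by field.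
rewrite H => e. nra.
Qed.

Lemma betaR (S P K L : algR) : S^+3 - 2*S^+2 + 2 = 0 -> P = S^+2 - S - 1 ->
  (`|K|+`|L|)^+2 * (P^+2 + 2*P*S + 3*S^+2 - 2*P + 6*S + 9) <=
  3844 * ((K+L)^+2*P^+3 + K*(K+L)*P^+2*S + K^+2*P^+2).
Proof.
move=> H HP; have /andP[s1 s2] := Sbounds _ H.
have p1 : 44/100 <= P by rewrite HP; nra.
have p2 : P <= 71/100 by rewrite HP; nra.
have c1 : 0 <= 2*S^+2 - S - 2 by nra.
have c2 : 2*S^+2 - S - 2 <= 52/100 by nra.
have E1 : P^+2 + 2*P*S + 3*S^+2 - 2*P + 6*S + 9 <= 7 by nra.
have E0 : 0 <= P^+2 + 2*P*S + 3*S^+2 - 2*P + 6*S + 9 by nra.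
have A : (`|K|+`|L|)^+2 <= 2*(K^+2+L^+2).
  have : (`|K| - `|L|)^+2 >= 0 by apply: sqr_ge0.
  rewrite -(real_normK (num_real K)) -(real_normK (num_real L)); nra.
have Q : (K^+2 + L^+2) * (18/100) <= K^+2*S^+2 + K*L*(2*S^+2-S-2) + L^+2*P.
  have h1 : 0 <= (2*S^+2-S-2) * (K+L)^+2 by apply: mulr_ge0 => //; apply: sqr_ge0.
  have h2 : 64/100 * K^+2 <= K^+2 * S^+2 by nra.
  have h3 : 44/100 * L^+2 <= L^+2 * P by nra.
  nra.
have e : (K+L)^+2*P^+3 + K*(K+L)*P^+2*S + K^+2*P^+2 =
   P^+2 * (K^+2*S^+2 + K*L*(2*S^+2-S-2) + L^+2*P).
  rewrite HP; ring.
rewrite e.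
have P2 : 19/100 <= P^+2 by nra.
have KL : 0 <= K^+2 + L^+2 by nra.
have Q0 : 0 <= K^+2*S^+2 + K*L*(2*S^+2-S-2) + L^+2*P by nra.
nra.
Qed.

Lemma alphaR (F K L : algR) : F^+3 = F^+2+F+1 ->
  `|(K*F^+2 + (K+L)*F^+3)/(F^+2+2*F+3)| <= `|K|+`|L|.
Proof.
move=> H.
have q : 0 < F^+2+F+1 by have := sqr_ge0 (F + 1/2); nra.
have F0 : 0 < F.
  rewrite ltNge; apply/negP => h.
  have : F^+3 <= 0 by rewrite exprS; apply: mulr_le0_ge0 => //; apply: sqr_ge0.
  lra.
have F2 : F <= 2.
  have : (F-2)*(F^+2+F+1) = -1.
    have -> : (F-2)*(F^+2+F+1) = F^+3 - (F^+2+F+1) - 1 by ring.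
    by rewrite H; ring.
  nra.
have D0 : 0 < F^+2+2*F+3 by nra.
have e : (K*F^+2 + (K+L)*F^+3)/(F^+2+2*F+3) =
  K * ((F^+2 + F^+3)/(F^+2+2*F+3)) + L * (F^+3/(F^+2+2*F+3)).
  have Dn : F^+2+2*F+3 != 0 by rewrite gt_eqF.
  by field.
rewrite e.
have a0 : 0 <= (F^+2 + F^+3)/(F^+2+2*F+3) by apply: divr_ge0; nra.
have a1 : (F^+2 + F^+3)/(F^+2+2*F+3) <= 1 by rewrite ler_pdivrMr // mul1r; nra.
have b0 : 0 <= F^+3/(F^+2+2*F+3) by apply: divr_ge0; nra.
have b1 : F^+3/(F^+2+2*F+3) <= 1 by rewrite ler_pdivrMr // mul1r; nra.
apply: (le_trans (ler_normD _ _)); rewrite (normrM K) (normrM L) (ger0_norm a0) (ger0_norm b0).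
apply: lerD; apply: ler_piMr => //.
Qed.

Lemma conjCK_add (z : algC) : (z + z^*)^* == z + z^*.
Proof. by rewrite rmorphD /= conjCK addrC. Qed.
Lemma conjCK_mul (z : algC) : (z * z^*)^* == z * z^*.
Proof. by rewrite rmorphM /= conjCK mulrC. Qed.

Lemma finalR (A Nn Dn E NN : algR) : 0 <= A -> 0 <= Nn -> 0 < Dn -> Nn^+2 = NN ->
  Dn^+2 = E -> A^+2 * E <= 3844 * NN -> A/31 <= 2*(Nn/Dn).
Proof.
move=> A0 N0 D0 eN eD H.
have h : A * Dn <= 62 * Nn.
  rewrite -eN -eD in H.
  rewrite leNgt; apply/negP => h.
  have h1 : 0 <= 62 * Nn by nra.
  nra.
rewrite ler_pdivrMr //.
have -> : 2 * (Nn / Dn) * 31 = (62 * Nn) / Dn by rewrite !mulrA; ring.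
by rewrite ler_pdivlMr.
Qed.

Lemma Epos (S P : algR) : S^+3 - 2*S^+2 + 2 = 0 -> P = S^+2 - S - 1 ->
  0 < P^+2 + 2*P*S + 3*S^+2 - 2*P + 6*S + 9.
Proof.
move=> H HP; have /andP[s1 s2] := Sbounds _ H.
have p1 : 44/100 <= P by rewrite HP; nra.
have p2 : P <= 71/100 by rewrite HP; nra.
nra.
Qed.

Theorem lemma2 (phi phi1 : algC) :
  trib_root phi -> phi \is Num.real ->
  trib_root phi1 -> phi1 \isn't Num.real ->
  forall k l : int,
    `|alpha phi k l| <= (`|k| + `|l|)%:~R /\
    beta phi1 k l >= (`|k| + `|l|)%:~R / 31.
Proof.
move=> Hphi phiR Hz zNR k l.
pose K : algR := k%:~R. pose L : algR := l%:~R.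
have vK : algRval K = k%:~R by rewrite rmorph_int.
have vL : algRval L = l%:~R by rewrite rmorph_int.
have vA : (`|k| + `|l|)%:~R = algRval (`|K| + `|L|).
  by rewrite rmorphD /= !intr_norm -vK -vL.
split.
  pose F := in_algR phiR.
  have eF : F^+3 = F^+2+F+1.
    by apply: val_inj; exact: Hphi.
  have := alphaR F K L eF.
  rewrite -[_ <= _]/(algRval _ <= algRval _) -vA.
  rewrite -[algRval `|_|]/(`|algRval _|).
  suff -> : alpha phi k l = algRval ((K*F^+2 + (K+L)*F^+3)/(F^+2+2*F+3)) by [].
  rewrite fmorph_div /= /alpha intrD -vK -vL; ring.

set z := phi1. pose w := z^*.
have Hz' : z^+3 = z^+2 + z + 1 := Hz.
have Hw : w^+3 = w^+2 + w + 1.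
  by rewrite /w -!rmorphXn Hz !rmorphD rmorph1.
have zw : z - w != 0.
  rewrite subr_eq0; apply: contra zNR => /eqP e.
  by rewrite CrealE; apply/eqP; exact: (esym e).
pose s := z + w. pose p := z * w.
have sR : s \is Num.real.
  by rewrite CrealE /s /w conjCK_add.
have pR : p \is Num.real by rewrite CrealE /p /w conjCK_mul.
have F0 : z^+2 + z*w + w^+2 - z - w - 1 = 0.
  have : (z - w) * (z^+2 + z*w + w^+2 - z - w - 1) = 0.
    have -> : (z - w) * (z^+2 + z*w + w^+2 - z - w - 1) =
       (z^+3 - (z^+2 + z + 1)) - (w^+3 - (w^+2 + w + 1)) by ring.
    by rewrite Hw Hz'; ring.
  by move/eqP; rewrite mulf_eq0 (negPf zw) /= => /eqP.
have HP : p = s^+2 - s - 1.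
  by apply/eqP; rewrite -subr_eq0 -oppr_eq0 -F0 /p /s; apply/eqP; ring.
have HS : s^+3 - 2*s^+2 + 2 = 0.
  have -> : s^+3 - 2*s^+2 + 2 = - ((z^+3 - (z^+2 + z + 1)) + (w^+3 - (w^+2 + w + 1))
     + (2 - 3*s) * (z^+2 + z*w + w^+2 - z - w - 1)) / 2 by rewrite /s; field.
  by rewrite Hw Hz' F0; ring.
pose S := in_algR sR. pose P := in_algR pR.
have HSR : S^+3 - 2*S^+2 + 2 = 0 by apply: val_inj; exact: HS.
have HPR : P = S^+2 - S - 1 by apply: val_inj; exact: HP.
have B := betaR S P K L HSR HPR.

pose N := (k+l)%:~R * z^+3 + k%:~R * z^+2. pose D := z^+2 + 2*z + 3.
pose Dw := w^+2 + 2*w + 3.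
have cD : D^* = Dw.
  rewrite /D /Dw !(rmorphD, rmorphM, rmorphXn) /= !conjC1 /w; ring.

have cN : N^* = (k+l)%:~R * w^+3 + k%:~R * w^+2.
  have ci : forall m : int, (m%:~R : algC)^* = m%:~R by move=> m; rewrite rmorph_int.
  by rewrite /N !(rmorphD, rmorphM, rmorphXn) /= !ci /w; ring.
pose ER := P^+2 + 2*P*S + 3*S^+2 - 2*P + 6*S + 9.
have eD : `|D|^+2 = algRval ER.
  by rewrite normCK cD /= /D /Dw /p /s; ring.

pose NNR := (K+L)^+2*P^+3 + K*(K+L)*P^+2*S + K^+2*P^+2.
have eN : `|N|^+2 = algRval NNR.
  rewrite normCK cN /= /N intrD -vK -vL /p /s; ring.
have E0 := Epos S P HSR HPR.
have D0 : D != 0.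
  apply/eqP => e; move: eD; rewrite e normr0 => e'.
  by move: E0; rewrite -[0 < ER]/(algRval 0 < algRval ER) -e' rmorph0 expr2 mulr0 ltxx.
have eb : k%:~R * psi1 z + l%:~R * zeta1 z = N / D.
  rewrite /psi1 /zeta1 /N intrD -/D !mulrA -mulrDl; congr (_ * _); ring.
rewrite /beta eb normrM normf_div (@ger0_norm _ 2) // vA.
pose Nn := in_algR (normr_real N). pose Dn := in_algR (normr_real D).
have eNR : Nn^+2 = NNR by apply: val_inj; exact: eN.
have eDR : Dn^+2 = ER by apply: val_inj; exact: eD.
have A0 : 0 <= `|K| + `|L| by apply: addr_ge0.
have N0 : 0 <= Nn by rewrite -[0 <= Nn]/(0 <= `|N|) normr_ge0.
have Dp : 0 < Dn by rewrite -[0 < Dn]/(0 < `|D|) normr_gt0.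
have h := finalR _ _ _ _ _ A0 N0 Dp eNR eDR B.
have e1 : algRval ((`|K| + `|L|)/31) = algRval (`|K| + `|L|) / 31 by rewrite fmorph_div rmorph_nat.
have e2 : algRval (2*(Nn/Dn)) = 2 * (`|N| / `|D|) by rewrite rmorphM fmorph_div rmorph_nat.
rewrite -e1 -e2; exact: h.
Qed.
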